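(* Let $c:S^1\to\mathbb{C}$ be a $\mathcal{C}^1$-embedding with image $\Gamma$, and let $F:V\to\mathrm{Tri}$ be the map $F(s_0,s_1,s_2)=[(c(s_0),c(s_1),c(s_2))]$. A point $(s_0,s_1,s_2)\in V$ is a critical point of $F$ (i.e. the tangent map of $F$ at that point is not surjective) if and only if the three tangent lines to $\Gamma$ at $c(s_0),c(s_1),c(s_2)$ are either all parallel or concurrent (all pass through a common point).
   Context: Identify the plane with $\mathbb{C}$. $\mathrm{Tri}$ is the smooth 3-manifold $\big(\mathbb{C}^2\setminus\{(0,0)\}\big)/\mathbb{R}_{>0}$, where a triple $(z_0,z_1,z_2)\in\mathbb{C}^3$ not of the form $(z,z,z)$ is sent to the class $[(z_0,z_1,z_2)]$ of $(z_1-z_0,z_2-z_0)$ under scalar multiplication by positive reals; thus $\mathrm{Tri}$ is the space of triangles modulo translations and positive homotheties. $V=(S^1)^3\setminus\{(s,s,s):s\in S^1\}$. A $\mathcal{C}^1$-embedding is an injective $\mathcal{C}^1$-immersion. The tangent line to $\Gamma$ at $c(s)$ is $c(s)+\mathbb{R}\,\dot c(s)$. *)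

(* Defs.v *)
From Stdlib Require Import Reals Lra ZArith.
Open Scope R_scope.

(* The plane C is identified with R^2; a curve c : S^1 -> C is given by its
   two real coordinate functions x, y : R -> R, 1-periodic (S^1 = R/Z). *)

Definition C1_embedding (x y dx dy : R -> R) : Prop :=
  (forall t, x (t + 1) = x t /\ y (t + 1) = y t) /\
  (forall t, derivable_pt_lim x t (dx t) /\ derivable_pt_lim y t (dy t)) /\
  (forall t, continuity_pt dx t /\ continuity_pt dy t) /\
  (forall t, dx t <> 0 \/ dy t <> 0) /\
  (forall s t, x s = x t -> y s = y t -> exists k : Z, s = t + IZR k).

(* (s0,s1,s2) (lifted to R^3) lies in V = (S^1)^3 minus the diagonal. *)
Definition in_V (s0 s1 s2 : R) : Prop :=
  ~ (exists k1 k2 : Z, s1 = s0 + IZR k1 /\ s2 = s0 + IZR k2).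

(* The representative (c(s1)-c(s0), c(s2)-c(s0)) in C^2 = R^4,
   coordinates k = 0,1,2,3. *)
Definition Gc (x y : R -> R) (s0 s1 s2 : R) (k : nat) : R :=
  match k with
  | 0%nat => x s1 - x s0
  | 1%nat => y s1 - y s0
  | 2%nat => x s2 - x s0
  | _ => y s2 - y s0
  end.

Definition Gnorm (x y : R -> R) (s0 s1 s2 : R) : R :=
  sqrt (Gc x y s0 s1 s2 0 ^ 2 + Gc x y s0 s1 s2 1 ^ 2
        + Gc x y s0 s1 s2 2 ^ 2 + Gc x y s0 s1 s2 3 ^ 2).

(* Tri = (C^2 \ 0)/R_{>0} is identified with the unit sphere S^3 in R^4
   via [w] |-> w/|w|.  F in this model: *)
Definition Fsph (x y : R -> R) (s0 s1 s2 : R) (k : nat) : R :=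
  Gc x y s0 s1 s2 k / Gnorm x y s0 s1 s2.

Definition is_partials (x y : R -> R) (s0 s1 s2 : R) (D : nat -> nat -> R)
  : Prop :=
  forall k, (k < 4)%nat ->
    derivable_pt_lim (fun t => Fsph x y t s1 s2 k) s0 (D 0%nat k) /\
    derivable_pt_lim (fun t => Fsph x y s0 t s2 k) s1 (D 1%nat k) /\
    derivable_pt_lim (fun t => Fsph x y s0 s1 t k) s2 (D 2%nat k).

(* Critical point: the tangent map dF : R^3 -> T_{F(s)} S^3 = F(s)^perp,
   (a0,a1,a2) |-> sum_i a_i D i, is not surjective. *)
Definition critical (x y : R -> R) (s0 s1 s2 : R) (D : nat -> nat -> R)
  : Prop :=
  exists v : nat -> R,
    v 0%nat * Fsph x y s0 s1 s2 0 + v 1%nat * Fsph x y s0 s1 s2 1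
    + v 2%nat * Fsph x y s0 s1 s2 2 + v 3%nat * Fsph x y s0 s1 s2 3 = 0 /\
    forall a0 a1 a2 : R,
      ~ (forall k, (k < 4)%nat ->
           a0 * D 0%nat k + a1 * D 1%nat k + a2 * D 2%nat k = v k).

Definition tangents_parallel (dx dy : R -> R) (s0 s1 s2 : R) : Prop :=
  dx s0 * dy s1 - dy s0 * dx s1 = 0 /\
  dx s0 * dy s2 - dy s0 * dx s2 = 0 /\
  dx s1 * dy s2 - dy s1 * dx s2 = 0.

Definition tangents_concurrent (x y dx dy : R -> R) (s0 s1 s2 : R) : Prop :=
  exists px py t0 t1 t2 : R,
    px = x s0 + t0 * dx s0 /\ py = y s0 + t0 * dy s0 /\
    px = x s1 + t1 * dx s1 /\ py = y s1 + t1 * dy s1 /\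
    px = x s2 + t2 * dx s2 /\ py = y s2 + t2 * dy s2.

(* Main.v *)
Require Import Defs.
From Stdlib Require Import Reals ZArith.
From Stdlib Require Import Lra Lia Classical FunctionalExtensionality.
Open Scope R_scope.

Definition dep4 (r : nat -> nat -> R) : Prop :=
  exists c : nat -> R, (c 0%nat <> 0 \/ c 1%nat <> 0 \/ c 2%nat <> 0 \/ c 3%nat <> 0) /\
   forall k, (k < 4)%nat ->
     c 0%nat * r 0%nat k + c 1%nat * r 1%nat k + c 2%nat * r 2%nat k + c 3%nat * r 3%nat k = 0.
Definition span4 (r : nat -> nat -> R) : Prop :=
  forall t : nat -> R, exists c : nat -> R, forall k, (k < 4)%nat ->
     c 0%nat * r 0%nat k + c 1%nat * r 1%nat k + c 2%nat * r 2%nat k + c 3%nat * r 3%nat k = t k.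


Lemma dnorm (p0 p1 p2 p3 f : R -> R) (q0 q1 q2 q3 qf t : R) :
  derivable_pt_lim p0 t q0 -> derivable_pt_lim p1 t q1 ->
  derivable_pt_lim p2 t q2 -> derivable_pt_lim p3 t q3 ->
  derivable_pt_lim f t qf ->
  0 < p0 t ^ 2 + p1 t ^ 2 + p2 t ^ 2 + p3 t ^ 2 ->
  derivable_pt_lim (fun s => f s / sqrt (p0 s ^ 2 + p1 s ^ 2 + p2 s ^ 2 + p3 s ^ 2)) t
   ((qf - (p0 t * q0 + p1 t * q1 + p2 t * q2 + p3 t * q3)
          / (p0 t ^ 2 + p1 t ^ 2 + p2 t ^ 2 + p3 t ^ 2) * f t)
    / sqrt (p0 t ^ 2 + p1 t ^ 2 + p2 t ^ 2 + p3 t ^ 2)).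
Proof.
intros H0 H1 H2 H3 Hf HQ.
set (Q := fun s => p0 s ^ 2 + p1 s ^ 2 + p2 s ^ 2 + p3 s ^ 2).
assert (HQd : derivable_pt_lim Q t (2 * (p0 t * q0 + p1 t * q1 + p2 t * q2 + p3 t * q3))).
{ assert (E : Q = (fun s => p0 s * p0 s + p1 s * p1 s + p2 s * p2 s + p3 s * p3 s)).
  { unfold Q; apply functional_extensionality; intro s; ring. }
  rewrite E.
  replace (2 * (p0 t * q0 + p1 t * q1 + p2 t * q2 + p3 t * q3)) with
   ((q0 * p0 t + p0 t * q0) + (q1 * p1 t + p1 t * q1) + (q2 * p2 t + p2 t * q2)
    + (q3 * p3 t + p3 t * q3)) by ring.
  repeat apply derivable_pt_lim_plus; apply derivable_pt_lim_mult; assumption. }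
assert (HQt : 0 < Q t) by exact HQ.
assert (HS : derivable_pt_lim (fun s => sqrt (Q s)) t
   (/ (2 * sqrt (Q t)) * (2 * (p0 t * q0 + p1 t * q1 + p2 t * q2 + p3 t * q3)))).
{ apply (derivable_pt_lim_comp Q sqrt); [exact HQd | apply derivable_pt_lim_sqrt; exact HQt]. }
assert (Hs : 0 < sqrt (Q t)) by (apply sqrt_lt_R0; exact HQt).
assert (Hss : sqrt (Q t) * sqrt (Q t) = Q t) by (apply sqrt_sqrt; lra).
pose proof (derivable_pt_lim_div f (fun s => sqrt (Q s)) t qf _ Hf HS (Rgt_not_eq _ _ Hs)) as HD.
match goal with |- derivable_pt_lim _ _ ?L =>
  replace L with ((qf * sqrt (Q t) - / (2 * sqrt (Q t)) * (2 * (p0 t * q0 + p1 t * q1 + p2 t * q2 + p3 t * q3)) * f t) / Rsqr (sqrt (Q t))) end.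

- exact HD.
- unfold Rsqr. change (p0 t ^ 2 + p1 t ^ 2 + p2 t ^ 2 + p3 t ^ 2) with (Q t). set (S := sqrt (Q t)) in *. rewrite <- Hss. field. lra.
Qed.

Definition dotr (r : nat -> nat -> R) (i j : nat) : R :=
  r i 0%nat * r j 0%nat + r i 1%nat * r j 1%nat + r i 2%nat * r j 2%nat + r i 3%nat * r j 3%nat.

Lemma crit_dep (r D : nat -> nat -> R) (N : R) (F : nat -> R) :
  (dep4 r -> dep4 (fun i j => r j i)) -> (~ dep4 r -> span4 r) ->
  0 < N ->
  N * N = dotr r 0 0 ->
  (forall k, F k = r 0%nat k / N) ->
  (forall i k, (i < 3)%nat -> (k < 4)%nat ->
     D i k = (r (S i) k - dotr r 0 (S i) / (N * N) * r 0%nat k) / N) ->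
  ((exists v : nat -> R,
    v 0%nat * F 0%nat + v 1%nat * F 1%nat + v 2%nat * F 2%nat + v 3%nat * F 3%nat = 0 /\
    forall a0 a1 a2 : R,
      ~ (forall k, (k < 4)%nat ->
           a0 * D 0%nat k + a1 * D 1%nat k + a2 * D 2%nat k = v k)) <-> dep4 r).
Proof.
intros dep_tr indep_span HN HNN HF HD.
assert (HN0 : N <> 0) by lra.
assert (HQ : dotr r 0 0 <> 0) by (rewrite <- HNN; nra).
split.
- intros [v [Hv Hna]].
  destruct (classic (dep4 r)) as [Hd|Hn]; [exact Hd|exfalso].
  destruct (indep_span Hn v) as [c Hc].
  assert (E0 := Hc 0%nat ltac:(lia)); assert (E1 := Hc 1%nat ltac:(lia));
  assert (E2 := Hc 2%nat ltac:(lia)); assert (E3 := Hc 3%nat ltac:(lia)).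
  rewrite !HF in Hv.
  assert (vG : v 0%nat * r 0%nat 0%nat + v 1%nat * r 0%nat 1%nat + v 2%nat * r 0%nat 2%nat
               + v 3%nat * r 0%nat 3%nat = 0).
  { replace (v 0%nat * r 0%nat 0%nat + v 1%nat * r 0%nat 1%nat + v 2%nat * r 0%nat 2%nat
               + v 3%nat * r 0%nat 3%nat) with
     (N * (v 0%nat * (r 0%nat 0%nat / N) + v 1%nat * (r 0%nat 1%nat / N) +
      v 2%nat * (r 0%nat 2%nat / N) + v 3%nat * (r 0%nat 3%nat / N))) by (field; lra).
    rewrite Hv; ring. }
  rewrite <- E0, <- E1, <- E2, <- E3 in vG.
  assert (vG' : c 0%nat * (N * N) + c 1%nat * dotr r 0 1 + c 2%nat * dotr r 0 2
                + c 3%nat * dotr r 0 3 = 0).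
  { rewrite HNN. unfold dotr. lra. }
  assert (K : c 0%nat = - (c 1%nat * (dotr r 0 1 / (N * N)) + c 2%nat * (dotr r 0 2 / (N * N))
                + c 3%nat * (dotr r 0 3 / (N * N)))).
  { apply (Rmult_eq_reg_r (N * N)); [|nra].
    replace (- (c 1%nat * (dotr r 0 1 / (N * N)) + c 2%nat * (dotr r 0 2 / (N * N))
                + c 3%nat * (dotr r 0 3 / (N * N))) * (N * N)) with
       (- (c 1%nat * dotr r 0 1 + c 2%nat * dotr r 0 2 + c 3%nat * dotr r 0 3)) by (field; lra).
    lra. }
  apply (Hna (c 1%nat * N) (c 2%nat * N) (c 3%nat * N)).
  intros k Hk.
  rewrite !HD by lia. rewrite <- (Hc k Hk). rewrite K. field. lra.
- intros Hd.
  destruct (dep_tr Hd) as [c [Hc0 Ho]].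
  assert (O0 := Ho 0%nat ltac:(lia)); assert (O1 := Ho 1%nat ltac:(lia));
  assert (O2 := Ho 2%nat ltac:(lia)); assert (O3 := Ho 3%nat ltac:(lia)).
  simpl in O0, O1, O2, O3.
  exists c; split.
  + rewrite !HF.
    replace (c 0%nat * (r 0%nat 0%nat / N) + c 1%nat * (r 0%nat 1%nat / N) +
      c 2%nat * (r 0%nat 2%nat / N) + c 3%nat * (r 0%nat 3%nat / N)) with
      ((c 0%nat * r 0%nat 0%nat + c 1%nat * r 0%nat 1%nat + c 2%nat * r 0%nat 2%nat
        + c 3%nat * r 0%nat 3%nat) / N) by (field; lra).
    rewrite O0; field; lra.
  + intros a0 a1 a2 Ha.
    assert (H0 := Ha 0%nat ltac:(lia)); assert (H1 := Ha 1%nat ltac:(lia));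
    assert (H2 := Ha 2%nat ltac:(lia)); assert (H3 := Ha 3%nat ltac:(lia)).
    assert (S : c 0%nat * c 0%nat + c 1%nat * c 1%nat + c 2%nat * c 2%nat + c 3%nat * c 3%nat = 0).
    { rewrite <- H0 at 2. rewrite <- H1 at 2. rewrite <- H2 at 2. rewrite <- H3 at 2.
      rewrite !HD by lia.
      set (m0 := dotr r 0 1 / (N * N)). set (m1 := dotr r 0 2 / (N * N)).
      set (m2 := dotr r 0 3 / (N * N)).
      set (P0 := c 0%nat * r 0%nat 0%nat + c 1%nat * r 0%nat 1%nat + c 2%nat * r 0%nat 2%nat + c 3%nat * r 0%nat 3%nat) in O0.
      set (P1 := c 0%nat * r 1%nat 0%nat + c 1%nat * r 1%nat 1%nat + c 2%nat * r 1%nat 2%nat + c 3%nat * r 1%nat 3%nat) in O1.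
      set (P2 := c 0%nat * r 2%nat 0%nat + c 1%nat * r 2%nat 1%nat + c 2%nat * r 2%nat 2%nat + c 3%nat * r 2%nat 3%nat) in O2.
      set (P3 := c 0%nat * r 3%nat 0%nat + c 1%nat * r 3%nat 1%nat + c 2%nat * r 3%nat 2%nat + c 3%nat * r 3%nat 3%nat) in O3.
      transitivity (a0 / N * (P1 - m0 * P0) + a1 / N * (P2 - m1 * P0) + a2 / N * (P3 - m2 * P0)).
      - unfold P0, P1, P2, P3. field. lra.
      - rewrite O0, O1, O2, O3. ring. }
    destruct Hc0 as [X|[X|[X|X]]]; nra.
Qed.

Definition rmat (X0 Y0 X1 Y1 X2 Y2 U0 V0 U1 V1 U2 V2 : R) (i k : nat) : R :=
  match i, k with
  | O, O => X1 - X0 | O, S O => Y1 - Y0 | O, S (S O) => X2 - X0 | O, _ => Y2 - Y0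
  | S O, O => - U0 | S O, S O => - V0 | S O, S (S O) => - U0 | S O, _ => - V0
  | S (S O), O => U1 | S (S O), S O => V1 | S (S O), _ => 0
  | _, O => 0 | _, S O => 0 | _, S (S O) => U2 | _, _ => V2
  end.

Ltac solve_l l := apply (Rmult_eq_reg_l l); [|auto];
  match goal with |- l * (?A + ?p / l * ?U) = l * (?B + ?q / l * ?W) =>
  replace (l*(A + p/l*U)) with (l*A + p*U) by (field; auto);
  replace (l*(B + q/l*W)) with (l*B + q*W) by (field; auto); lra end.

Lemma geom X0 Y0 X1 Y1 X2 Y2 U0 V0 U1 V1 U2 V2 :
  (U0 <> 0 \/ V0 <> 0) -> (U1 <> 0 \/ V1 <> 0) -> (U2 <> 0 \/ V2 <> 0) ->
  (dep4 (rmat X0 Y0 X1 Y1 X2 Y2 U0 V0 U1 V1 U2 V2) <->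
   (U0 * V1 - V0 * U1 = 0 /\ U0 * V2 - V0 * U2 = 0 /\ U1 * V2 - V1 * U2 = 0) \/
   (exists px py t0 t1 t2 : R,
     px = X0 + t0 * U0 /\ py = Y0 + t0 * V0 /\
     px = X1 + t1 * U1 /\ py = Y1 + t1 * V1 /\
     px = X2 + t2 * U2 /\ py = Y2 + t2 * V2)).
Proof.
intros Hu0 Hu1 Hu2.
assert (P0 : 0 < U0 * U0 + V0 * V0) by (destruct Hu0; nra).
assert (P1 : 0 < U1 * U1 + V1 * V1) by (destruct Hu1; nra).
assert (P2 : 0 < U2 * U2 + V2 * V2) by (destruct Hu2; nra).
split.
- intros [c [Hc Hk]].
  assert (E0 := Hk 0%nat ltac:(lia)); assert (E1 := Hk 1%nat ltac:(lia));
  assert (E2 := Hk 2%nat ltac:(lia)); assert (E3 := Hk 3%nat ltac:(lia)).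
  simpl in E0, E1, E2, E3.
  destruct (Req_dec (c 0%nat) 0) as [Z|Z].
  + left. rewrite Z in E0, E1, E2, E3.
    set (a := c 1%nat) in *; set (b := c 2%nat) in *; set (d := c 3%nat) in *.
    assert (Ha : a <> 0).
    { intro Ha. rewrite Ha in E0, E1, E2, E3.
      assert (b * (U1 * U1 + V1 * V1) = 0) by nra.
      assert (d * (U2 * U2 + V2 * V2) = 0) by nra.
      assert (b = 0) by (destruct (Rmult_integral _ _ H); [auto|lra]).
      assert (d = 0) by (destruct (Rmult_integral _ _ H0); [auto|lra]).
      destruct Hc as [X|[X|[X|X]]]; contradiction. }
    assert (Hb : b <> 0).
    { intro Hb. rewrite Hb in E0, E1.
      assert (a * (U0 * U0 + V0 * V0) = 0) by nra.
      destruct (Rmult_integral _ _ H); [auto|lra]. }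
    assert (Hd : d <> 0).
    { intro Hd. rewrite Hd in E2, E3.
      assert (a * (U0 * U0 + V0 * V0) = 0) by nra.
      destruct (Rmult_integral _ _ H); [auto|lra]. }
    assert (F0 : a * U0 = b * U1) by lra. assert (F1 : a * V0 = b * V1) by lra.
    assert (F2 : a * U0 = d * U2) by lra. assert (F3 : a * V0 = d * V2) by lra.
    assert (C1 : a * (U0 * V1 - V0 * U1) = 0).
    { transitivity (V1 * (a * U0) - U1 * (a * V0)); [ring|rewrite F0, F1; ring]. }
    assert (C2 : a * (U0 * V2 - V0 * U2) = 0).
    { transitivity (V2 * (a * U0) - U2 * (a * V0)); [ring|rewrite F2, F3; ring]. }
    assert (C3 : b * d * (U1 * V2 - V1 * U2) = 0).
    { transitivity ((b * U1) * (d * V2) - (b * V1) * (d * U2)); [ring|].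
      rewrite <- F0, <- F1, <- F2, <- F3; ring. }
    split; [|split].
    * destruct (Rmult_integral _ _ C1); [contradiction|auto].
    * destruct (Rmult_integral _ _ C2); [contradiction|auto].
    * destruct (Rmult_integral _ _ C3) as [Y|Y]; [|auto].
      destruct (Rmult_integral _ _ Y); contradiction.
  + right. set (a := c 1%nat) in *; set (b := c 2%nat) in *; set (d := c 3%nat) in *.
    set (l := c 0%nat) in *.
    exists (X0 + a / l * U0), (Y0 + a / l * V0), (a / l), (b / l), (d / l).
    repeat split; try reflexivity.
    * solve_l l.
    * solve_l l.
    * solve_l l.
    * solve_l l.
- intros [[C1 [C2 C3]] | [px [py [t0 [t1 [t2 [A0 [A1 [A2 [A3 [A4 A5]]]]]]]]]]].
  + set (p01 := U0 * U1 + V0 * V1). set (p02 := U0 * U2 + V0 * V2).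
    set (n0 := U0 * U0 + V0 * V0).
    assert (Hp02 : p02 * p02 = n0 * (U2 * U2 + V2 * V2)).
    { unfold p02, n0. replace (U0 * U2 + V0 * V2) with (U0 * U2 + V0 * V2) by ring.
      transitivity ((U0 * U0 + V0 * V0) * (U2 * U2 + V2 * V2) - (U0 * V2 - V0 * U2) ^ 2); [ring|].
      rewrite C2; ring. }
    assert (Hp : p02 <> 0).
    { intro Z. rewrite Z in Hp02. unfold n0 in Hp02. assert (0 < (U0 * U0 + V0 * V0) * (U2 * U2 + V2 * V2)) by (apply Rmult_lt_0_compat; auto). lra. }
    exists (fun i => match i with O => 0 | S O => - (p01 * p02) | S (S O) => - (n0 * p02) | _ => - (n0 * p01) end).
    split.
    * right; right; left. simpl. intro Z.
      assert (n0 * p02 = 0) by lra. destruct (Rmult_integral _ _ H); [unfold n0 in *; lra | auto].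
    * intros k Hk. destruct k as [|[|[|[|k]]]]; [| | | |lia]; simpl; unfold p01, p02, n0.
      -- transitivity ((U0 * U2 + V0 * V2) * V0 * (U0 * V1 - V0 * U1)); [ring|rewrite C1; ring].
      -- transitivity (- (U0 * U2 + V0 * V2) * U0 * (U0 * V1 - V0 * U1)); [ring|rewrite C1; ring].
      -- transitivity ((U0 * U1 + V0 * V1) * V0 * (U0 * V2 - V0 * U2)); [ring|rewrite C2; ring].
      -- transitivity (- (U0 * U1 + V0 * V1) * U0 * (U0 * V2 - V0 * U2)); [ring|rewrite C2; ring].
  + exists (fun i => match i with O => 1 | S O => t0 | S (S O) => t1 | _ => t2 end).
    split; [left; simpl; lra|].
    intros k Hk. destruct k as [|[|[|[|k]]]]; [| | | |lia]; simpl; lra.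
Qed.

From HB Require structures.
From mathcomp Require all_boot all_algebra Rstruct.

Module LA.
Import structures all_boot all_algebra Rstruct.
Import GRing.Theory.
Local Open Scope ring_scope.

Lemma sum4 (f : 'I_4 -> R) : \sum_(i < 4) f i = f (inord 0) + f (inord 1) + f (inord 2) + f (inord 3).
Proof.
rewrite !big_ord_recl big_ord0 addr0 !addrA.
by congr (_ + _ + _ + _); congr f; apply: val_inj; rewrite /= inordK.
Qed.

Lemma ord4 (j : 'I_4) : j = inord 0 \/ j = inord 1 \/ j = inord 2 \/ j = inord 3.
Proof.
have E : j = inord j by apply: val_inj; rewrite /= inordK.
case: j E => [[|[|[|[|n]]]] Hn] E /=; rewrite E; by [left|right;left|right;right;left|right;right;right|].
Qed.

Definition mk (r : nat -> nat -> R) : 'M[R]_4 := \matrix_(i < 4, j < 4) r i j.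

Lemma mkE r (a b : nat) : (a < 4)%N -> (b < 4)%N -> mk r (inord a) (inord b) = r a b.
Proof. by move=> Ha Hb; rewrite mxE !inordK. Qed.

Lemma row_nz (v : 'rV[R]_4) : v != 0 ->
  (v 0 (inord 0) <> 0)%R \/ (v 0 (inord 1) <> 0)%R \/ (v 0 (inord 2) <> 0)%R \/ (v 0 (inord 3) <> 0)%R.
Proof.
move=> Hv.
case: (Req_dec (v 0 (inord 0)) 0%R) => H0; last by left.
case: (Req_dec (v 0 (inord 1)) 0%R) => H1; last by right; left.
case: (Req_dec (v 0 (inord 2)) 0%R) => H2; last by right; right; left.
case: (Req_dec (v 0 (inord 3)) 0%R) => H3; last by right; right; right.
exfalso; move/eqP: Hv; apply; apply/rowP => j; rewrite mxE.
by case: (ord4 j) => [->|[->|[->|->]]].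
Qed.

Lemma dep_det r : dep4 r <-> \det (mk r) = 0.
Proof.
split.
- move=> [c [Hc Hk]]; apply/eqP/det0P.
  exists (\row_(i < 4) c i).
    apply/eqP => /rowP H.
    have H0 := H (inord 0); have H1 := H (inord 1); have H2 := H (inord 2); have H3 := H (inord 3).
    rewrite !mxE !inordK // in H0 H1 H2 H3.
    by case: Hc => [X|[X|[X|X]]]; apply: X.
  apply/rowP => k; rewrite !mxE sum4 !mxE !inordK //.
  have := Hk k (ltP (ltn_ord k)).
  by rewrite /= !RplusE !RmultE.
- move/eqP/det0P => [v Hv Hm].
  exists (fun i => v 0 (inord i)); split; first exact: row_nz.
  move=> k /ltP Hk4.
  have := congr1 (fun M : 'rV_4 => M 0 (inord k)) Hm.
  rewrite /= !mxE sum4 !mkE // => ->.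
Qed.

Lemma dep_tr r : dep4 r -> dep4 (fun i j => r j i).
Proof.
move/dep_det => H; apply/dep_det.
have -> : mk (fun i j => r j i) = (mk r)^T by apply/matrixP => i j; rewrite !mxE.
by rewrite det_tr.
Qed.

Lemma indep_span r : ~ dep4 r -> span4 r.
Proof.
move=> Hn t.
have Hu : mk r \in unitmx.
  rewrite unitmxE unitfE; apply/eqP => H; apply: Hn; exact/dep_det.
set tv : 'rV[R]_4 := \row_(k < 4) t k.
have E : (tv *m invmx (mk r)) *m mk r = tv by rewrite mulmxKV.
exists (fun i => (tv *m invmx (mk r)) 0 (inord i)).
move=> k /ltP Hk4.
have := congr1 (fun M : 'rV_4 => M 0 (inord k)) E.
have Et : tv 0 (inord k) = t k by rewrite mxE inordK.
rewrite /= [X in X = _]mxE sum4 !mkE // Et => H; exact: H.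
Qed.
End LA.

Lemma dcm (f : R -> R) (a t l : R) :
  derivable_pt_lim f t l -> derivable_pt_lim (fun s => a - f s) t (- l).
Proof.
intro H. replace (- l) with (0 - l) by ring.
apply (derivable_pt_lim_minus (fun _ => a) f); [apply derivable_pt_lim_const|exact H].
Qed.

Lemma dmc (f : R -> R) (a t l : R) :
  derivable_pt_lim f t l -> derivable_pt_lim (fun s => f s - a) t l.
Proof.
intro H. replace l with (l - 0) by ring.
apply (derivable_pt_lim_minus f (fun _ => a)); [exact H|apply derivable_pt_lim_const].
Qed.

Lemma dcst (a t : R) : derivable_pt_lim (fun _ => a) t 0.
Proof. apply derivable_pt_lim_const. Qed.

Theorem proposition2p1 (x y dx dy : R -> R) :
  C1_embedding x y dx dy ->
  forall s0 s1 s2 : R, in_V s0 s1 s2 ->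
  forall D : nat -> nat -> R, is_partials x y s0 s1 s2 D ->
  (critical x y s0 s1 s2 D <->
   tangents_parallel dx dy s0 s1 s2 \/ tangents_concurrent x y dx dy s0 s1 s2).
Proof.
intros [Hper [Hder [Hcont [Hnz Hinj]]]] s0 s1 s2 HV D HP.
set (r := rmat (x s0) (y s0) (x s1) (y s1) (x s2) (y s2)
               (dx s0) (dy s0) (dx s1) (dy s1) (dx s2) (dy s2)).
set (Q := Gc x y s0 s1 s2 0 ^ 2 + Gc x y s0 s1 s2 1 ^ 2
        + Gc x y s0 s1 s2 2 ^ 2 + Gc x y s0 s1 s2 3 ^ 2).
assert (HQ : 0 < Q).
{ unfold Q, Gc.
  destruct (Rlt_or_le 0 ((x s1 - x s0) ^ 2 + (y s1 - y s0) ^ 2 + (x s2 - x s0) ^ 2 + (y s2 - y s0) ^ 2))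
    as [H|H]; [exact H|exfalso].
  assert (Z : forall a, a ^ 2 = a * a) by (intro; ring). rewrite !Z in H.
  assert (sq0 : forall a b c d, 0 <= a * a -> 0 <= b * b -> 0 <= c * c -> 0 <= d * d ->
     a * a + b * b + c * c + d * d <= 0 -> a = 0) by
   (intros a b c d A B C D' S; assert (a * a = 0) by lra;
    destruct (Rmult_integral _ _ H0); assumption).
  pose proof (Rle_0_sqr (x s1 - x s0)) as Q1. pose proof (Rle_0_sqr (y s1 - y s0)) as Q2.
  pose proof (Rle_0_sqr (x s2 - x s0)) as Q3. pose proof (Rle_0_sqr (y s2 - y s0)) as Q4.
  unfold Rsqr in Q1, Q2, Q3, Q4.
  pose proof (sq0 _ _ _ _ Q1 Q2 Q3 Q4 ltac:(lra)) as E1.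
  pose proof (sq0 _ _ _ _ Q2 Q1 Q3 Q4 ltac:(lra)) as E2.
  pose proof (sq0 _ _ _ _ Q3 Q1 Q2 Q4 ltac:(lra)) as E3.
  pose proof (sq0 _ _ _ _ Q4 Q1 Q2 Q3 ltac:(lra)) as E4.
  apply Rminus_diag_uniq in E1, E2, E3, E4.
  destruct (Hinj s1 s0 E1 E2) as [k1 K1]. destruct (Hinj s2 s0 E3 E4) as [k2 K2].
  apply HV. exists k1, k2. split; assumption. }
set (N := Gnorm x y s0 s1 s2).
assert (HNQ : N = sqrt Q) by reflexivity.
assert (HN : 0 < N) by (rewrite HNQ; apply sqrt_lt_R0; exact HQ).
assert (HNN : N * N = Q) by (rewrite HNQ; apply sqrt_sqrt; lra).
assert (HGr : forall k, Gc x y s0 s1 s2 k = r 0%nat k).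
{ intro k. destruct k as [|[|[|[|k]]]]; reflexivity. }
assert (HQd : Q = dotr r 0 0) by (unfold Q, dotr; rewrite !HGr; ring).
assert (HD : forall i k, (i < 3)%nat -> (k < 4)%nat ->
     D i k = (r (S i) k - dotr r 0 (S i) / (N * N) * r 0%nat k) / N).
{ intros i k Hi Hk.
  destruct (HP k Hk) as [P0 [P1 P2]].
  destruct i as [|[|[|i]]]; [| | |lia].
  - assert (Hd : forall j, (j < 4)%nat ->
       derivable_pt_lim (fun t => Gc x y t s1 s2 j) s0 (r 1%nat j)).
    { intros j Hj. destruct j as [|[|[|[|j]]]]; [| | | |lia]; simpl;
      apply dcm; apply Hder. }
    pose proof (dnorm (fun t => Gc x y t s1 s2 0) (fun t => Gc x y t s1 s2 1)
      (fun t => Gc x y t s1 s2 2) (fun t => Gc x y t s1 s2 3) (fun t => Gc x y t s1 s2 k)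
      _ _ _ _ _ s0 (Hd 0%nat ltac:(lia)) (Hd 1%nat ltac:(lia)) (Hd 2%nat ltac:(lia))
      (Hd 3%nat ltac:(lia)) (Hd k Hk) HQ) as H.
    rewrite (uniqueness_limite _ _ _ _ P0 H).
    cbv beta. fold Q. rewrite <- HNQ, HNN, HQd. rewrite !HGr. unfold dotr. reflexivity.
  - assert (Hd : forall j, (j < 4)%nat ->
       derivable_pt_lim (fun t => Gc x y s0 t s2 j) s1 (r 2%nat j)).
    { intros j Hj. destruct j as [|[|[|[|j]]]]; [| | | |lia]; simpl;
      first [apply dmc; apply Hder | apply dcst]. }
    pose proof (dnorm (fun t => Gc x y s0 t s2 0) (fun t => Gc x y s0 t s2 1)
      (fun t => Gc x y s0 t s2 2) (fun t => Gc x y s0 t s2 3) (fun t => Gc x y s0 t s2 k)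
      _ _ _ _ _ s1 (Hd 0%nat ltac:(lia)) (Hd 1%nat ltac:(lia)) (Hd 2%nat ltac:(lia))
      (Hd 3%nat ltac:(lia)) (Hd k Hk) HQ) as H.
    rewrite (uniqueness_limite _ _ _ _ P1 H).
    cbv beta. fold Q. rewrite <- HNQ, HNN, HQd. rewrite !HGr. unfold dotr. reflexivity.
  - assert (Hd : forall j, (j < 4)%nat ->
       derivable_pt_lim (fun t => Gc x y s0 s1 t j) s2 (r 3%nat j)).
    { intros j Hj. destruct j as [|[|[|[|j]]]]; [| | | |lia]; simpl;
      first [apply dmc; apply Hder | apply dcst]. }
    pose proof (dnorm (fun t => Gc x y s0 s1 t 0) (fun t => Gc x y s0 s1 t 1)
      (fun t => Gc x y s0 s1 t 2) (fun t => Gc x y s0 s1 t 3) (fun t => Gc x y s0 s1 t k)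
      _ _ _ _ _ s2 (Hd 0%nat ltac:(lia)) (Hd 1%nat ltac:(lia)) (Hd 2%nat ltac:(lia))
      (Hd 3%nat ltac:(lia)) (Hd k Hk) HQ) as H.
    rewrite (uniqueness_limite _ _ _ _ P2 H).
    cbv beta. fold Q. rewrite <- HNQ, HNN, HQd. rewrite !HGr. unfold dotr. reflexivity. }
unfold critical.
etransitivity.
- apply (crit_dep r D N (Fsph x y s0 s1 s2) (LA.dep_tr r) (LA.indep_span r) HN).
  + rewrite HNN; exact HQd.
  + intro k. unfold Fsph. rewrite HGr. reflexivity.
  + exact HD.
- apply geom; apply Hnz.
Qed.
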